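(* Let $M$ be a Kripke model with yesterday and $U$ an action model over $L_{\mathsf{DETL}}$, and suppose $M,w^*\models\mathrm{pre}^U(s^* )$ for some $w^*\in W^M$ and $s^*\in W^U$ (so $M[U]$ is a Kripke model). Then: (a) If $M$ satisfies persistence of facts, then so does $M[U]$. (b) If $M$ and $U$ are depth-defined, then so is $M[U]$. (c) If $M$ and $U$ satisfy knowledge of the past and $U$ is history preserving, then $M[U]$ satisfies knowledge of the past. (d) If $M$ satisfies knowledge of the initial time and $U$ is history preserving, then $M[U]$ satisfies knowledge of the initial time. (e) If $M$ and $U$ satisfy uniqueness of the past, then so does $M[U]$. (f) If $M$ and $U$ satisfy perfect recall and $U$ is history preserving, then $M[U]$ satisfies perfect recall. (g) If $M$ and $U$ are synchronous and $U$ is history preserving, then $M[U]$ is synchronous.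
   Context: Fix a nonempty finite set $\mathsf{Agt}$ of agents and a nonempty set $\mathsf{Prop}$ of letters. A Kripke model (with yesterday) is $M=(W^M,(\to^M_a)_{a\in\mathsf{Agt}},\leadsto^M,V^M)$ with $W^M$ a nonempty set, binary relations $\to^M_a,\leadsto^M$ on $W^M$ ($w'\leadsto w$: $w'$ is a yesterday of $w$), $V^M:\mathsf{Prop}\to\mathcal P(W^M)$. An action model over a set $F$ of formulas is $U=(W^U,(\to^U_a)_a,\leadsto^U,\mathrm{pre}^U)$ with $W^U$ nonempty finite, binary relations $\to^U_a,\leadsto^U$, and $\mathrm{pre}^U:W^U\to F$. An event $s$ is a past state if there is no $s'\leadsto^Us$. $L_{\mathsf{DETL}}$ (with action models over it) is given by $\varphi::=p\mid\neg\varphi\mid\varphi\wedge\varphi\mid\Box_a\varphi\mid[Y]\varphi\mid[U,s]\varphi$. Semantics: Boolean standard; $M,w\models\Box_a\varphi$ iff $\varphi$ holds at all $v$ with $w\to^M_av$; $M,w\models[Y]\varphi$ iff $\varphi$ holds at all $v\leadsto^Mw$; $M,w\models[U,s]\varphi$ iff $M,w\models\mathrm{pre}^U(s)$ implies $M[U],(w,s)\models\varphi$. The product $M[U]$ has worlds $\{(v,t)\in W^M\times W^U:M,v\models\mathrm{pre}^U(t)\}$, $(v,t)\to_a(v',t')$ iff $v\to^M_av'$ and $t\to^U_at'$, $(v',t')\leadsto(v,t)$ iff ($v'\leadsto^Mv$, $t'=t$, $t$ a past state) or ($v'=v$, $t'\leadsto^Ut$), and $(v,t)\in V(p)$ iff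 $v\in V^M(p)$. $\models\varphi$ means truth at all pointed Kripke models. A progression is a finite nonempty sequence $x_0,\dots,x_n$ with $x_i\leadsto x_{i+1}$, of length $n$; a history is a progression that cannot be extended by adding elements at the beginning. $\mathrm{depth}(x)$ is the maximum length of a history ending at $x$ if the maximum exists, else $\infty$. The following apply to Kripke models or action models (with worlds/events $w,v,\dots$), except where noted: Persistence of facts (Kripke models only): $w\leadsto w'$ implies ($w\in V(p)\iff w'\in V(p)$) for all $p$. Depth-definedness: $\mathrm{depth}(w)\ne\infty$ for all $w$. Knowledge of the past: $w'\leadsto w\to_a v$ implies there is $v'$ with $v'\leadsto v$. Knowledge of the initial time: if $w\to_av$ and there is no $w'\leadsto w$ then there is no $v'\leadsto v$. Uniqueness of the past: $w'\leadsto w$ and $w''\leadsto w$ imply $w'=w''$. Perfect recall: $w\leadsto v\to_a v'$ implies there is $w'$ with $w\to_aw'\leadsto v'$. Synchronicity: the structure is depth-defined and $w\to_aw'$ implies $\mathrm{depth}(w)=\mathrm{depth}(w')$. An epistemic past state of $U$ is a past state $s$ with $\models\mathrm{pre}^U(s)$ whose only outgoing epistemic arrows are the reflexive arrows $s\to^U_as$ for each $a\in\mathsf{Agt}$. History preservation (action models only): $s'\leadsto^Us$ implies $\models\mathrm{pre}^U(s)\to\mathrm{pre}^U(s')$, and every past state of $U$ is an epistemic past state. *)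

(* Defs.v *)
From mathcomp Require Import all_boot.
Unset Printing Implicit Defensive.

Section Logic.
Context {Agt : finType}.
Context {Letter : Type}.

(* An action model over formulas is given inline by
   its number of events n.+1 (events = 'I_n.+1, nonempty finite), its
   epistemic relations, its yesterday relation and its precondition map;
   ActBox n ra ry pre s phi is [U,s]phi. *)
Inductive form : Type :=
| Atom of Letter
| Neg of form
| And of form & form
| Box of Agt & form
| Yest of form
| ActBox (n : nat) (ra : Agt -> 'I_n.+1 -> 'I_n.+1 -> bool)
         (ry : 'I_n.+1 -> 'I_n.+1 -> bool) (pre : 'I_n.+1 -> form)
         (s : 'I_n.+1) (phi : form).

Definition Imp (phi psi : form) : form := Neg (And phi (Neg psi)).

(* Kripke models with yesterday; yest w' w means w' ~> w (w' is a yesterday of w). *)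
Record kripke := Kripke {
  world : Type;
  krel  : Agt -> world -> world -> Prop;
  kyest : world -> world -> Prop;
  kval  : Letter -> world -> Prop }.

Definition past_ev (n : nat) (ry : 'I_n.+1 -> 'I_n.+1 -> bool) (t : 'I_n.+1) : Prop :=
  forall t', ~~ ry t' t.

(* Product M[U], where ok v t stands for M,v |= pre(t). *)
Definition prod_model (M : kripke) n (ra : Agt -> 'I_n.+1 -> 'I_n.+1 -> bool)
  (ry : 'I_n.+1 -> 'I_n.+1 -> bool) (ok : world M -> 'I_n.+1 -> Prop) : kripke :=
  @Kripke {x : world M * 'I_n.+1 | ok x.1 x.2}
    (fun a x y => krel M a (sval x).1 (sval y).1 /\ ra a (sval x).2 (sval y).2)
    (fun x' x => (kyest M (sval x').1 (sval x).1 /\ (sval x').2 = (sval x).2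
                   /\ past_ev n ry (sval x).2)
              \/ ((sval x').1 = (sval x).1 /\ ry (sval x').2 (sval x).2))
    (fun p x => kval M p (sval x).1).

Fixpoint sat (M : kripke) (w : world M) (phi : form) {struct phi} : Prop :=
  match phi with
  | Atom p => kval M p w
  | Neg psi => ~ sat M w psi
  | And psi chi => sat M w psi /\ sat M w chi
  | Box a psi => forall v, krel M a w v -> sat M v psi
  | Yest psi => forall v, kyest M v w -> sat M v psi
  | ActBox n ra ry pre s psi =>
      forall h : sat M w (pre s),
        sat (prod_model M n ra ry (fun v t => sat M v (pre t)))
            (exist (fun x : world M * 'I_n.+1 => sat M x.1 (pre x.2)) (w, s) h) psi
  end.

Definition valid (phi : form) : Prop := forall (M : kripke) (w : world M), sat M w phi.

Record actmodel := ActModel {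
  asz   : nat;
  arel  : Agt -> 'I_asz.+1 -> 'I_asz.+1 -> bool;
  ayest : 'I_asz.+1 -> 'I_asz.+1 -> bool;
  apre  : 'I_asz.+1 -> form }.

Definition product (M : kripke) (U : actmodel) : kripke :=
  prod_model M (asz U) (arel U) (ayest U) (fun v t => sat M v (apre U t)).

Section Props.
Context {T : Type}.
Variable R : Agt -> T -> T -> Prop.
Variable Y : T -> T -> Prop.

Definition history_len (x : T) (n : nat) : Prop :=
  exists f : nat -> T, f n = x /\ (forall i, i < n -> Y (f i) (f i.+1))
                       /\ ~ (exists y, Y y (f 0)).

Definition depth_is (x : T) (d : nat) : Prop :=
  history_len x d /\ forall n, history_len x n -> n <= d.

Definition persistence (V : Letter -> T -> Prop) : Prop :=
  forall w w' p, Y w w' -> (V p w <-> V p w').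

Definition depth_defined : Prop := forall x, exists d, depth_is x d.

Definition know_past : Prop :=
  forall a w' w v, Y w' w -> R a w v -> exists v', Y v' v.

Definition know_init : Prop :=
  forall a w v, R a w v -> (forall w', ~ Y w' w) -> forall v', ~ Y v' v.

Definition unique_past : Prop :=
  forall w w' w'', Y w' w -> Y w'' w -> w' = w''.

Definition perfect_recall : Prop :=
  forall a w v v', Y w v -> R a v v' -> exists w', R a w w' /\ Y w' v'.

Definition synchronous : Prop :=
  depth_defined /\
  forall a w w' d d', R a w w' -> depth_is w d -> depth_is w' d' -> d = d'.
End Props.

Definition KR (M : kripke) := krel M.
Definition KY (M : kripke) := kyest M.
Definition AR (U : actmodel) : Agt -> 'I_(asz U).+1 -> 'I_(asz U).+1 -> Prop :=
  fun a s t => arel U a s t.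
Definition AY (U : actmodel) : 'I_(asz U).+1 -> 'I_(asz U).+1 -> Prop :=
  fun s t => ayest U s t.

Definition past_state (U : actmodel) (s : 'I_(asz U).+1) : Prop :=
  forall s', ~ AY U s' s.

Definition epistemic_past_state (U : actmodel) (s : 'I_(asz U).+1) : Prop :=
  past_state U s /\ valid (apre U s) /\
  (forall a t, AR U a s t <-> t = s).

Definition history_preserving (U : actmodel) : Prop :=
  (forall s s', AY U s' s -> valid (Imp (apre U s) (apre U s'))) /\
  (forall s, past_state U s -> epistemic_past_state U s).

End Logic.

Arguments form : clear implicits.
Arguments kripke : clear implicits.
Arguments actmodel : clear implicits.

(* Main.v *)
Require Import Defs.
From mathcomp Require Import all_boot zify.
From Stdlib Require Import Classical ProofIrrelevance.
Unset Printing Implicit Defensive.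

Section Gen.
Context {T : Type} (Y : T -> T -> Prop).

Definition prog (a b : T) (m : nat) :=
  exists g : nat -> T, g 0 = a /\ g m = b /\ forall i, i < m -> Y (g i) (g i.+1).

Lemma hist_cat {b c n m} : history_len Y b n -> prog b c m -> history_len Y c (n+m).
Proof.
move=> [f [fn [fs fr]]] [g [g0 [gm gs]]].
pose F i := if i <= n then f i else g (i - n).
have Fge : forall i, n <= i -> F i = g (i - n).
  move=> i hi; rewrite /F; case: ifP => h //.
  have -> : i = n by lia. by rewrite subnn fn g0.
exists F; split; last split.
- rewrite Fge ?leq_addr //; by rewrite addKn.
- move=> i hi; case: (ltnP i n) => hin.
  + rewrite /F ifT ?ifT; [exact: fs | by [] | lia].
  + rewrite !Fge //; last lia. have -> : i.+1 - n = (i - n).+1 by lia.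
    apply: gs; lia.
- by rewrite /F leq0n.
Qed.

Lemma hist_ext {x z n} : history_len Y x n -> Y x z -> history_len Y z n.+1.
Proof.
move=> h yz; rewrite -addn1; apply: hist_cat h _.
exists (fun i => if i == 0 then x else z); split => //; split => // i; case: i => //.
Qed.

Lemma depth_uniq {x d d'} : depth_is Y x d -> depth_is Y x d' -> d = d'.
Proof. move=> [h1 b1] [h2 b2]; have := b1 _ h2; have := b2 _ h1; lia. Qed.

Lemma depth_lt {x z d d'} : depth_is Y x d -> depth_is Y z d' -> Y x z -> d < d'.
Proof. move=> [h1 _] [_ b2] yz; exact: b2 _ (hist_ext h1 yz). Qed.

Lemma prog_le {x d n a} : depth_defined Y -> depth_is Y x d -> prog a x n -> n <= d.
Proof.
move=> dd [_ b] pr; have [d0 [h0 _]] := dd a.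
have := b _ (hist_cat h0 pr); lia.
Qed.

Lemma bounded_max (P : nat -> Prop) B : P 0 -> (forall m, P m -> m <= B) ->
  exists n, P n /\ forall m, P m -> m <= n.
Proof.
elim: B => [|B IH] P0 hb; first by exists 0; split => // m /hb.
case: (classic (P B.+1)) => h; first by exists B.+1.
apply: IH => // m pm; have := hb _ pm.
have : m <> B.+1 by move=> e; subst.
lia.
Qed.

Lemma depth_from_bound x B : (forall a n, prog a x n -> n <= B) -> exists d, depth_is Y x d.
Proof.
move=> hb.
pose P n := exists f : nat -> T, f n = x /\ forall i, i < n -> Y (f i) (f i.+1).
have P0 : P 0 by exists (fun _ => x); split => // i.
have PB : forall m, P m -> m <= B by move=> m [f [fm fs]]; apply: (hb (f 0)); exists f.
have [n [[f [fn fs]] hm]] := @bounded_max P B P0 PB.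
exists n; split.
- exists f; split => //; split => // [[y hy]].
  have : n.+1 <= n; last by rewrite ltnn.
  apply: hm; exists (fun i => if i == 0 then y else f i.-1); split => //.
  move=> [|i] hi //=; apply: fs; lia.
- move=> m [g [gm [gs _]]]; apply: hm; by exists g.
Qed.
End Gen.

Lemma exist_eq {A : Type} {P : A -> Prop} (a b : sig P) : sval a = sval b -> a = b.
Proof. case: a => a pa; case: b => b pb /= e; subst; f_equal; apply: proof_irrelevance. Qed.

Section Mod.
Context {Agt : finType} {Letter : Type} (M : kripke Agt Letter) (U : actmodel Agt Letter).
Notation MU := (product M U).
Notation pre := (apre U).

Lemma past_conv s : past_state U s -> past_ev (asz U) (ayest U) s.
Proof. by move=> h t; apply/negP; apply: h. Qed.

Lemma Lsub : history_preserving U -> forall v t t', sat M v (pre t) -> AY U t' t -> sat M v (pre t').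
Proof.
move=> [hp _] v t t' h y; have := hp _ _ y M v => /= H.
apply: NNPP => n; by apply: H.
Qed.

Lemma Lvalid : history_preserving U -> forall s, past_state U s -> forall v, sat M v (pre s).
Proof. by move=> [_ hp] s ps v; have [_ [hv _]] := hp s ps; apply: hv. Qed.

Lemma Lepi : history_preserving U -> forall s, past_state U s -> forall a t, AR U a s t <-> t = s.
Proof. by move=> [_ hp] s ps; have [_ [_ he]] := hp s ps. Qed.

Lemma L1 : depth_defined (KY M) -> depth_defined (AY U) ->
  forall (g : nat -> world MU) n, (forall i, i < n -> KY MU (g i) (g i.+1)) ->
  forall dm du, depth_is (KY M) (sval (g n)).1 dm -> depth_is (AY U) (sval (g n)).2 du ->
  n <= dm + du.
Proof.
move=> ddM ddU g n gs.
have key : forall i, i <= n -> exists dm du, depth_is (KY M) (sval (g i)).1 dm /\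
   depth_is (AY U) (sval (g i)).2 du /\ i <= dm + du.
  elim => [|i IH] hi.
    have [dm hm] := ddM (sval (g 0)).1; have [du hu] := ddU (sval (g 0)).2.
    by exists dm, du.
  have [dm [du [hm [hu le]]]] := IH (ltnW hi).
  have [dm' hm'] := ddM (sval (g i.+1)).1; have [du' hu'] := ddU (sval (g i.+1)).2.
  exists dm', du'; split => //; split => //.
  case: (gs i hi) => /= [[h1 [h2 h3]] | [h1 h2]].
  - have := depth_lt _ hm hm' h1. rewrite h2 in hu. have := depth_uniq _ hu hu'. lia.
  - have := depth_lt _ hu hu' h2. rewrite h1 in hm. have := depth_uniq _ hm hm'. lia.
move=> dm du hm hu; have [dm' [du' [hm' [hu' le]]]] := key n (leqnn n).
have := depth_uniq _ hm hm'; have := depth_uniq _ hu hu'; lia.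
Qed.

Lemma Lb : depth_defined (KY M) -> depth_defined (AY U) -> depth_defined (KY MU).
Proof.
move=> ddM ddU x.
have [dm hm] := ddM (sval x).1; have [du hu] := ddU (sval x).2.
apply: (depth_from_bound _ _ (dm + du)) => a n [g [g0 [gn gs]]].
move: hm hu; rewrite -gn; exact: (L1 ddM ddU _ _ gs).
Qed.

Lemma Ldepth : depth_defined (KY M) -> depth_defined (AY U) -> history_preserving U ->
  forall x dm du, depth_is (KY M) (sval x).1 dm -> depth_is (AY U) (sval x).2 du ->
  depth_is (KY MU) x (dm + du).
Proof.
move=> ddM ddU hp [[v t] H] dm du /= hm hu; split; last first.
  move=> n [g [gn [gs _]]]; have := L1 ddM ddU _ _ gs dm du; rewrite gn; exact.
have hm0 := hm; have hu0 := hu.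
case: hm => [[h [hdm [hs hr]]] _]; case: hu => [[f [fdu [fs fr]]] _].
set s := f 0.
have ps : past_state U s by move=> s' y; apply: fr; exists s'.
pose k i : world MU := exist _ (h i, s) (Lvalid hp _ ps (h i)).
have Hs : forall i, i <= du -> sat M v (pre (f i)).
  have: forall j, j <= du -> sat M v (pre (f (du - j))).
    elim => [|j IH] hj; first by rewrite subn0 fdu.
    apply: (Lsub hp _ _ _ (IH (ltnW hj))).
    have -> : du - j = (du - j.+1).+1 by lia.
    apply: fs; lia.
  move=> hj i hi; have := hj (du - i) (leq_subr _ _); by rewrite subKn.
pose g i : world MU := exist _ (v, f (minn i du)) (Hs (minn i du) (geq_minr i du)).
have -> : exist (fun x : world M * _ => sat M x.1 (apre U x.2)) (v, t) H = g du.
  by apply: exist_eq => /=; rewrite minnn fdu.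
apply: (@hist_cat _ _ _ _ dm du); last first.
  exists g; split => //; split => // i hi; right => /=; split => //.
  have -> : minn i du = i by lia. have -> : minn i.+1 du = i.+1 by lia.
  exact: fs.
have -> : g 0 = k dm by apply: exist_eq => /=; rewrite hdm min0n.
exists k; split => //; split.
  move=> i hi; left => /=; split; first exact: hs.
  split => //; exact: past_conv.
move=> [y [[y1 [_ _]] | [_ y2]]]; first by apply: hr; exists (sval y).1; exact: y1.
exact: (ps _ y2).
Qed.


Lemma past_conv2 s : past_ev (asz U) (ayest U) s -> past_state U s.
Proof. by move=> h t' y; have := h t'; rewrite /AY in y; rewrite y. Qed.

Lemma La : persistence (KY M) (kval M) -> persistence (KY MU) (kval MU).
Proof.
move=> pM [[w s] H] [[w' s'] H'] p /= [[hy _] | [e _]]; first exact: pM.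
by subst.
Qed.

Lemma Lc : know_past (KR M) (KY M) -> know_past (AR U) (AY U) -> history_preserving U ->
     know_past (KR MU) (KY MU).
Proof.
move=> kM kU hp a [[w1 s1] H1] [[w s] H] [[v t] Hv] /= [[hy [e ps]] | [e hy]] [hr ha].
- subst. have ps' := past_conv2 _ ps.
  have et : t = s by apply/(Lepi hp _ ps' a).
  subst. have [v' hv'] := kM a _ _ _ hy hr.
  exists (exist _ (v', s) (Lvalid hp _ ps' v')); left => /=; split => //.
- subst. have [t' ht'] := kU a _ _ _ hy ha.
  exists (exist _ (v, t') (Lsub hp _ _ _ Hv ht')); right => /=; split => //.
Qed.

Lemma Ld : know_init (KR M) (KY M) -> history_preserving U -> know_init (KR MU) (KY MU).
Proof.
move=> kM hp a [[w s] H] [[v t] Hv] /= [hr ha] hno [[v1 t1] H1] /= hy.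
have ps : past_state U s.
  move=> s' y; apply: (hno (exist _ (w, s') (Lsub hp _ _ _ H y))); right => /=; split => //.
have et : t = s by apply/(Lepi hp _ ps a). subst.
have nw : forall w', ~ KY M w' w.
  move=> w' y; apply: (hno (exist _ (w', s) (Lvalid hp _ ps w'))); left => /=; split => //.
  split => //; exact: past_conv.
case: hy => [[y _] | [_ y]]; first exact: (kM a _ _ hr nw _ y).
exact: (ps _ y).
Qed.

Lemma Le : unique_past (KY M) -> unique_past (AY U) -> unique_past (KY MU).
Proof.
move=> uM uU [[w s] H] [[w1 s1] H1] [[w2 s2] H2] /= h1 h2; apply: exist_eq => /=.
case: h1 => [[y1 [e1 p1]] | [e1 y1]]; case: h2 => [[y2 [e2 p2]] | [e2 y2]] => /=.
- by rewrite e1 e2 (uM _ _ _ y1 y2).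
- by have := p1 s2; rewrite y2.
- by have := p2 s1; rewrite y1.
- by rewrite e1 e2 (uU _ _ _ y1 y2).
Qed.

Lemma Lf : perfect_recall (KR M) (KY M) -> perfect_recall (AR U) (AY U) ->
     history_preserving U -> perfect_recall (KR MU) (KY MU).
Proof.
move=> pM pU hp a [[w s] H] [[v t] Hv] [[v2 t2] H2] /= [[hy [e ps]] | [e hy]] [hr ha].
- subst. have ps' := past_conv2 _ ps.
  have et : t2 = t by apply/(Lepi hp _ ps' a). subst.
  have [w2 [r2 y2]] := pM a _ _ _ hy hr.
  exists (exist _ (w2, t) (Lvalid hp _ ps' w2)) => /=; split.
    split => //; by apply/(Lepi hp _ ps' a).
  by left.
- subst. have [s2 [r2 y2]] := pU a _ _ _ hy ha.
  exists (exist _ (v2, s2) (Lsub hp _ _ _ H2 y2)) => /=; split => //.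
  by right.
Qed.

Lemma Lg : synchronous (KR M) (KY M) -> synchronous (AR U) (AY U) ->
     history_preserving U -> synchronous (KR MU) (KY MU).
Proof.
move=> [ddM sM] [ddU sU] hp; split; first exact: Lb.
move=> a x y d d' [hr ha] hx hy.
have [dm hm] := ddM (sval x).1; have [du hu] := ddU (sval x).2.
have [dm' hm'] := ddM (sval y).1; have [du' hu'] := ddU (sval y).2.
rewrite -(depth_uniq _ (Ldepth ddM ddU hp _ _ _ hm hu) hx).
rewrite -(depth_uniq _ (Ldepth ddM ddU hp _ _ _ hm' hu') hy).
by rewrite (sM _ _ _ _ _ hr hm hm') (sU _ _ _ _ _ ha hu hu').
Qed.

End Mod.

Theorem theorem19 (Agt : finType) (Letter : Type) (a0 : Agt) (p0 : Letter)
  (M : kripke Agt Letter) (U : actmodel Agt Letter)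
  (wst : world M) (sst : 'I_(asz U).+1)
  (Hpre : sat M wst (apre U sst)) :
  let MU := product M U in
  (* (a) *)
  (persistence (KY M) (kval M) -> persistence (KY MU) (kval MU)) /\
  (* (b) *)
  (depth_defined (KY M) -> depth_defined (AY U) -> depth_defined (KY MU)) /\
  (* (c) *)
  (know_past (KR M) (KY M) -> know_past (AR U) (AY U) -> history_preserving U ->
     know_past (KR MU) (KY MU)) /\
  (* (d) *)
  (know_init (KR M) (KY M) -> history_preserving U -> know_init (KR MU) (KY MU)) /\
  (* (e) *)
  (unique_past (KY M) -> unique_past (AY U) -> unique_past (KY MU)) /\
  (* (f) *)
  (perfect_recall (KR M) (KY M) -> perfect_recall (AR U) (AY U) ->
     history_preserving U -> perfect_recall (KR MU) (KY MU)) /\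
  (* (g) *)
  (synchronous (KR M) (KY M) -> synchronous (AR U) (AY U) ->
     history_preserving U -> synchronous (KR MU) (KY MU)).
Proof.
move=> MU; split; first exact: La.
split; first exact: Lb.
split; first exact: Lc.
split; first exact: Ld.
split; first exact: Le.
split; first exact: Lf.
exact: Lg.
Qed.
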